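(* Let $0<k\le1$. (i) The system $$R(\bar{x};\underline{x},\bar{x})=\tfrac1k,\qquad J'(\bar{x}-;\underline{x},\bar{x})=1$$ has a unique solution $(\underline{x},\bar{x})$ with $\bar{x}>\underline{x}\ge0$, and it satisfies $0\le\underline{x}<x^*<\bar{x}$. Moreover, if $k=1$ then $\underline{x}=0$, and if $k<1$ then $\underline{x}>0$. (ii) For this unique solution, $\bar{x}$ satisfies the equation $J'\big(\bar{x}-;\bar{x}-k\tfrac{g(\bar{x})}{g'(\bar{x})},\bar{x}\big)=1$ and $\underline{x}=\bar{x}-k\frac{g(\bar{x})}{g'(\bar{x})}$. (iii) The equation in (ii) is equivalent to $g\big(\bar{x}-k\tfrac{g(\bar{x})}{g'(\bar{x})}\big)=(1-k)g(\bar{x})$.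
   Context: Fix $r>0$ and $\mu,\sigma:\mathbb{R}\to\mathbb{R}$ satisfying: (A.1) $\mu,\sigma$ are continuously differentiable and Lipschitz continuous, and $\mu',\sigma'$ are Lipschitz continuous; (A.2) $\sigma^2(x)>0$ for $x\ge0$; (A.3) $\mu'(x)<r$ for $x\ge0$; (A.4) there are $\varepsilon>0$, $x_a\ge0$ with $\mu'(x)<r-\varepsilon$ for $x\ge x_a$; (A.5) $\mu(0)>0$. Let $g$ be a canonical solution: $g\in C^2(0,\infty)$, $\mu g'+\frac12\sigma^2g''=rg$ on $(0,\infty)$, $g(0)=0$, $g'(0)>0$; then $g'>0$ on $[0,\infty)$, and $x^*\in(0,\infty)$ denotes the unique point with $g''(x^* )=0$, $g''<0$ on $(0,x^* )$, $g''>0$ on $(x^*,\infty)$. For the surplus $dX_t=\mu(X_t)dt+\sigma(X_t)dW_t-dD_t$, $X_0=x$, with bankruptcy time $\tau=\inf\{t\ge0:X_t\le0\}$, and $\bar{x}>\underline{x}\ge0$, the constant lump sum dividend barrier policy $(\underline{x},\bar{x})$ pays $\bar{x}-\underline{x}$ at the times $\tau_1=\inf\{t>0:X_t\ge\bar{x}\}$, $\tau_n=\inf\{t>\tau_{n-1}:X_t\ge\bar{x}\}$, plus $x-\underline{x}$ at time $0$ if $x\ge\bar{x}$. $J(x;\underline{x},\bar{x})=\mathbb{E}_x\big(\sum_{n:\tau_n\le\tau}e^{-r\tau_n}\zeta_n\big)$ and $R(x;\underline{x},\bar{x})=\mathbb{E}_x\big(\sum_{n:\tau_n\le\tau}e^{-r\tau_n}\big)$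 for this policy ($\zeta_n$ the dividends); explicitly $J(x;\underline{x},\bar{x})=g(x)\frac{\bar{x}-\underline{x}}{g(\bar{x})-g(\underline{x})}$, $R(x;\underline{x},\bar{x})=\frac{g(x)}{g(\bar{x})-g(\underline{x})}$ for $0\le x\le\bar{x}$. $J'$ denotes the derivative in $x$ and $J'(\bar{x}-;\cdot)$ the left derivative at $\bar{x}$. *)

(* Defs.v *)
From Stdlib Require Import Reals.
From Coquelicot Require Import Coquelicot.
Open Scope R_scope.

Definition lipschitz (f : R -> R) : Prop :=
  exists L : R, forall x y : R, Rabs (f x - f y) <= L * Rabs (x - y).

(* Explicit value functions of the lump sum barrier policy (xl, xu),
   valid for 0 <= x <= xu (as given in the paper):
   J(x; xl, xu) = g(x) (xu - xl) / (g(xu) - g(xl)),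
   R(x; xl, xu) = g(x) / (g(xu) - g(xl)). *)
Definition Jval (g : R -> R) (xl xu x : R) : R :=
  g x * (xu - xl) / (g xu - g xl).
Definition Rval (g : R -> R) (xl xu x : R) : R :=
  g x / (g xu - g xl).

Definition has_left_deriv (f : R -> R) (x l : R) : Prop :=
  filterlim (fun y => (f y - f x) / (y - x)) (at_left x) (locally l).

Definition has_right_deriv (f : R -> R) (x l : R) : Prop :=
  filterlim (fun y => (f y - f x) / (y - x)) (at_right x) (locally l).

Definition barrier_system (g : R -> R) (k xl xu : R) : Prop :=
  0 <= xl /\ xl < xu /\
  Rval g xl xu xu = 1 / k /\
  has_left_deriv (Jval g xl xu) xu 1.

(* Main.v *)
From Stdlib Require Import Reals Lra Ranalysis5.
From Coquelicot Require Import Coquelicot.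
Require Import Defs.
From Stdlib Require Import Classical.
Open Scope R_scope.

Lemma mvt_s (f df : R -> R) a b : a < b ->
  (forall c, a < c < b -> is_derive f c (df c)) ->
  (forall c, a <= c <= b -> continuity_pt f c) ->
  exists c, a < c < b /\ f b - f a = df c * (b - a).
Proof.
  intros Hab Hd Hc.
  pose (pr1 := fun c (P : a < c < b) =>
    exist (fun l => derivable_pt_abs f c l) (df c) (proj1 (is_derive_Reals _ _ _) (Hd c P))).
  destruct (MVT f id a b pr1 (fun c _ => derivable_pt_id c) Hab Hc
    (fun c _ => derivable_continuous_pt _ _ (derivable_pt_id c))) as [c [P E]].
  exists c; split; [exact P|].
  rewrite derive_pt_id in E.
  assert (derive_pt f c (pr1 c P) = df c) as E2.
  { apply derive_pt_eq_0. exact (proj1 (is_derive_Reals _ _ _) (Hd c P)). }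
  rewrite E2 in E. unfold id in E. lra.
Qed.

Lemma is_derive_cont (f : R -> R) (x l : R) : is_derive f x l -> continuity_pt f x.
Proof. intros H. apply continuity_pt_filterlim. assert (E: ex_derive f x) by (exists l; exact H). exact (ex_derive_continuous f x E). Qed.

Lemma ball_R (x e y : R) : ball x e y <-> Rabs (y - x) < e.
Proof. reflexivity. Qed.

Lemma right_cont0 (g : R -> R) L : has_right_deriv g 0 L ->
  forall eps, 0 < eps -> exists d, 0 < d /\ forall y, 0 < y < d -> Rabs (g y - g 0) < eps.
Proof.
  intros H eps He.
  apply filterlim_locally with (eps := mkposreal 1 Rlt_0_1) in H.
  destruct H as [[d1 Hd1] H]. simpl in H.
  assert (Hp : 0 < Rabs L + 1) by (pose proof (Rabs_pos L); lra).
  exists (Rmin d1 (eps / (Rabs L + 1))). split.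
  { apply Rmin_pos; [exact Hd1| apply Rdiv_lt_0_compat; lra]. }
  intros y [Hy1 Hy2].
  assert (Hb : ball 0 d1 y).
  { apply ball_R. rewrite Rminus_0_r, Rabs_pos_eq by lra. pose proof (Rmin_l d1 (eps / (Rabs L + 1))); lra. }
  specialize (H y Hb Hy1). change (Rabs (((g y - g 0) / (y - 0)) - L) < 1) in H.
  rewrite Rminus_0_r in H.
  assert (Hq : Rabs ((g y - g 0) / y) < Rabs L + 1).
  { idtac. pose proof (Rabs_triang_inv ((g y - g 0) / y) L). lra. }
  replace (g y - g 0) with (y * ((g y - g 0) / y)) by (field; lra).
  rewrite Rabs_mult, (Rabs_pos_eq y) by lra.
  pose proof (Rmin_r d1 (eps / (Rabs L + 1))).
  assert (y < eps / (Rabs L + 1)) by lra.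
  apply Rle_lt_trans with (y * (Rabs L + 1)).
  { apply Rmult_le_compat_l; lra. }
  apply Rmult_lt_reg_r with (/ (Rabs L + 1)). apply Rinv_0_lt_compat; lra.
  rewrite Rmult_assoc, Rinv_r by lra. lra.
Qed.

Lemma gt_cont (g g1 : R -> R) :
  (forall x, 0 < x -> continuity_pt g x) -> has_right_deriv g 0 (g1 0) ->
  forall y, continuity_pt (fun y => g (Rmax 0 y)) y.
Proof.
  intros Hc Hr y.
  unfold continuity_pt, continue_in, limit1_in, limit_in; simpl; unfold R_dist.
  intros eps He.
  destruct (Rlt_or_le 0 y) as [Hy|Hy].
  - specialize (Hc y Hy).
    unfold continuity_pt, continue_in, limit1_in, limit_in in Hc; simpl in Hc; unfold R_dist in Hc.
    destruct (Hc eps He) as [d [Hd H]].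
    exists (Rmin d y). split. apply Rmin_pos; lra.
    intros z [Hdz Hz].
    pose proof (Rmin_l d y); pose proof (Rmin_r d y).
    assert (0 < z) by (apply Rabs_lt_between' in Hz; lra).
    rewrite !Rmax_right by lra.
    apply H. split. exact Hdz. lra.
  - destruct (right_cont0 g _ Hr eps He) as [d [Hd H]].
    exists d. split. exact Hd.
    intros z [_ Hz].
    rewrite (Rmax_left 0 y) by lra.
    destruct (Rlt_or_le 0 z) as [Hz0|Hz0].
    + rewrite Rmax_right by lra. apply H.
      apply Rabs_lt_between' in Hz; lra.
    + rewrite Rmax_left by lra. rewrite Rminus_diag, Rabs_R0. exact He.
Qed.

Lemma mvt_g (g g1 : R -> R) :
  (forall x, 0 < x -> is_derive g x (g1 x)) -> has_right_deriv g 0 (g1 0) ->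
  forall a b, 0 <= a < b -> exists c, a < c < b /\ g b - g a = g1 c * (b - a).
Proof.
  intros Hd Hr a b [Ha Hab].
  assert (Hc : forall x, 0 < x -> continuity_pt g x)
    by (intros x Hx; exact (is_derive_cont _ _ _ (Hd x Hx))).
  destruct (mvt_s (fun y => g (Rmax 0 y)) g1 a b Hab) as [c [Hc1 Hc2]].
  - intros c Hc'. apply is_derive_ext_loc with g; [|apply Hd; lra].
    assert (Hp : 0 < c) by lra.
    exists (mkposreal c Hp). intros t Ht. simpl in Ht.
    change (Rabs (t - c) < c) in Ht. apply Rabs_lt_between' in Ht.
    rewrite Rmax_right by lra. reflexivity.
  - intros c _. exact (gt_cont g g1 Hc Hr c).
  - exists c. split; [exact Hc1|]. rewrite !Rmax_right in Hc2 by lra. exact Hc2.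
Qed.

Lemma left_deriv_J (g g1 : R -> R) a b L : 0 < b -> is_derive g b (g1 b) ->
  (has_left_deriv (Jval g a b) b L <-> L = (b - a) / (g b - g a) * g1 b).
Proof.
  intros Hb Hd.
  set (c := (b - a) / (g b - g a)).
  assert (Hq : filterlim (fun y => (g y - g b) / (y - b)) (at_left b) (locally (g1 b))).
  { apply is_derive_Reals in Hd.
    apply filterlim_locally. intros eps.
    destruct (Hd eps (cond_pos eps)) as [d Hdd].
    exists d. intros y Hy Hyb.
    change (Rabs (y - b) < d) in Hy.
    change (Rabs ((g y - g b) / (y - b) - g1 b) < eps).
    specialize (Hdd (y - b)). rewrite (Rplus_minus b y) in Hdd.
    apply Hdd; [lra | exact Hy]. }
  assert (Hc : filterlim (fun y => (Jval g a b y - Jval g a b b) / (y - b)) (at_left b) (locally (c * g1 b))).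
  { eapply filterlim_ext.
    2: { eapply filterlim_comp. exact Hq. apply (filterlim_scal_r c (g1 b)). }
    intros y0. unfold Jval, c, scal; simpl. unfold mult; simpl.
    unfold Rdiv. ring. }
  split.
  - intros H. unfold has_left_deriv in H.
    apply (filterlim_locally_unique _ _ _ H Hc).
  - intros ->. exact Hc.
Qed.
Theorem lemma4p4
  (r : R) (mu sigma mu' sigma' : R -> R)
  (g g1 g2 : R -> R) (xstar k : R)
  (Hr : 0 < r)
  (Hmu_d : forall x, is_derive mu x (mu' x))
  (Hsigma_d : forall x, is_derive sigma x (sigma' x))
  (Hmu'_c : forall x, continuous mu' x)
  (Hsigma'_c : forall x, continuous sigma' x)
  (Hmu_L : lipschitz mu) (Hsigma_L : lipschitz sigma)
  (Hmu'_L : lipschitz mu') (Hsigma'_L : lipschitz sigma')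
  (HA2 : forall x, 0 <= x -> 0 < sigma x ^ 2)
  (HA3 : forall x, 0 <= x -> mu' x < r)
  (HA4 : exists eps xa, 0 < eps /\ 0 <= xa /\ forall x, xa <= x -> mu' x < r - eps)
  (HA5 : 0 < mu 0)
  (Hg_d : forall x, 0 < x -> is_derive g x (g1 x))
  (Hg1_d : forall x, 0 < x -> is_derive g1 x (g2 x))
  (Hg2_c : forall x, 0 < x -> continuous g2 x)
  (Hode : forall x, 0 < x -> mu x * g1 x + / 2 * sigma x ^ 2 * g2 x = r * g x)
  (Hg0 : g 0 = 0)
  (Hg'0 : has_right_deriv g 0 (g1 0))
  (Hg1_c0 : filterlim g1 (at_right 0) (locally (g1 0)))
  (Hg'0pos : 0 < g1 0)
  (Hg1pos : forall x, 0 <= x -> 0 < g1 x)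
  (Hxstar : 0 < xstar) (Hg2star : g2 xstar = 0)
  (Hconc : forall x, 0 < x < xstar -> g2 x < 0)
  (Hconv : forall x, xstar < x -> 0 < g2 x)
  (Hk : 0 < k <= 1) :
  (exists xl xu, barrier_system g k xl xu /\
     forall yl yu, barrier_system g k yl yu -> yl = xl /\ yu = xu) /\
  (forall xl xu, barrier_system g k xl xu ->
     xl < xstar < xu /\
     (k = 1 -> xl = 0) /\ (k < 1 -> 0 < xl) /\
     has_left_deriv (Jval g (xu - k * g xu / g1 xu) xu) xu 1 /\
     xl = xu - k * g xu / g1 xu) /\
  (forall xu, 0 < xu -> 0 <= xu - k * g xu / g1 xu ->
     (has_left_deriv (Jval g (xu - k * g xu / g1 xu) xu) xu 1 <->
      g (xu - k * g xu / g1 xu) = (1 - k) * g xu)).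
Proof.
  assert (Hgc : forall x, 0 < x -> continuity_pt g x)
    by (intros x Hx; exact (is_derive_cont _ _ _ (Hg_d x Hx))).
  assert (Hg1c : forall x, 0 < x -> continuity_pt g1 x)
    by (intros x Hx; exact (is_derive_cont _ _ _ (Hg1_d x Hx))).
  pose proof (mvt_g g g1 Hg_d Hg'0) as MVg.
  assert (MVg1 : forall a b, 0 < a < b -> exists c, a < c < b /\ g1 b - g1 a = g2 c * (b - a)).
  { intros a b Hab. apply mvt_s. lra.
    intros c Hc. apply Hg1_d. lra. intros c Hc. apply Hg1c. lra. }
  assert (Ginc : forall a b, 0 <= a < b -> g a < g b).
  { intros a b Hab. destruct (MVg a b Hab) as [c [Hc E]].
    pose proof (Hg1pos c ltac:(lra)). nra. }
  assert (Gpos : forall x, 0 < x -> 0 < g x).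
  { intros x Hx. rewrite <- Hg0. apply Ginc. lra. }
  assert (Gz : forall x, 0 <= x -> g x = 0 -> x = 0).
  { intros x Hx E. destruct (Rle_lt_or_eq_dec 0 x Hx) as [H|H]; [|auto].
    pose proof (Gpos x H). lra. }
  assert (G1inc : forall a b, xstar <= a < b -> g1 a < g1 b).
  { intros a b Hab. destruct (MVg1 a b ltac:(lra)) as [c [Hc E]].
    pose proof (Hconv c ltac:(lra)). nra. }
  assert (G1dec : forall a b, 0 < a < b -> b <= xstar -> g1 b < g1 a).
  { intros a b Hab Hb. destruct (MVg1 a b ltac:(lra)) as [c [Hc E]].
    pose proof (Hconc c ltac:(lra)). nra. }
  assert (CL : forall m q a y, 0 <= a < y -> y < xstar ->
            g a - (m * a + q) >= 0 -> g xstar - (m * xstar + q) > 0 ->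
            g y - (m * y + q) > 0).
  { intros m q a y Hay Hy Ha Hs.
    destruct (MVg a y Hay) as [c1 [Hc1 E1]].
    destruct (MVg y xstar ltac:(lra)) as [c2 [Hc2 E2]].
    pose proof (G1dec c1 c2 ltac:(lra) ltac:(lra)).
    destruct (Rlt_or_le 0 (g y - (m * y + q))) as [Hd|Hd]; [lra|exfalso].
    assert (g1 c1 <= m).
    { destruct (Rle_or_lt (g1 c1) m) as [H'|H']; [auto|].
      assert (0 < (g1 c1 - m) * (y - a)) by (apply Rmult_lt_0_compat; lra). nra. }
    assert ((g1 c2 - m) * (xstar - y) < 0).
    { apply Rmult_neg_pos; lra. }
    nra. }
  assert (TanPos : forall b, xstar < b -> g xstar - (g1 b * xstar + (g b - g1 b * b)) > 0).
  { intros b Hb. destruct (MVg xstar b ltac:(lra)) as [c [Hc E]].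
    pose proof (G1inc c b ltac:(lra)).
    assert (0 < (g1 b - g1 c) * (b - xstar)) by (apply Rmult_lt_0_compat; lra). nra. }
  assert (TanNeg : forall b y, 0 <= y < b -> b <= xstar -> g y < g b + g1 b * (y - b)).
  { intros b y Hy Hb. destruct (MVg y b Hy) as [c [Hc E]].
    pose proof (G1dec c b ltac:(lra) Hb).
    assert (0 < (g1 c - g1 b) * (b - y)) by (apply Rmult_lt_0_compat; lra). nra. }
  assert (TanConv : forall b y, xstar <= y < b -> g y > g b + g1 b * (y - b)).
  { intros b y Hy. destruct (MVg y b ltac:(lra)) as [c [Hc E]].
    pose proof (G1inc c b ltac:(lra)).
    assert (0 < (g1 b - g1 c) * (b - y)) by (apply Rmult_lt_0_compat; lra). nra. }
  assert (SC : forall xl xu, barrier_system g k xl xu ->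
            0 <= xl /\ xl < xu /\ g xl = (1 - k) * g xu /\
            g xl = g xu + g1 xu * (xl - xu) /\ xl < xstar < xu).
  { intros xl xu [H1 [H2 [H3 H4]]].
    assert (Hxu : 0 < xu) by lra.
    pose proof (Ginc xl xu ltac:(lra)) as HS.
    pose proof (Gpos xu Hxu) as Hgp.
    apply (left_deriv_J g g1 xl xu 1 Hxu (Hg_d xu Hxu)) in H4.
    unfold Rval in H3.
    assert (E1 : g xu - g xl = k * g xu).
    { assert (H : g xu = 1 / k * (g xu - g xl)) by (rewrite <- H3; field; lra).
      assert (k * g xu = g xu - g xl) by (rewrite H at 1; field; lra). lra. }
    assert (E2 : g xu - g xl = (xu - xl) * g1 xu).
    { transitivity ((g xu - g xl) * ((xu - xl) / (g xu - g xl) * g1 xu)).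
      rewrite <- H4; ring. field; lra. }
    assert (T : g xl = g xu + g1 xu * (xl - xu)) by lra.
    repeat split; try lra.
    - destruct (Rlt_or_le xl xstar) as [Hl|Hl]; [auto|].
      pose proof (TanConv xu xl ltac:(lra)). lra.
    - destruct (Rlt_or_le xstar xu) as [Hl|Hl]; [auto|].
      pose proof (TanNeg xu xl ltac:(lra) Hl). lra. }
  assert (TL : forall a a' b b', 0 <= a <= a' -> a' < xstar -> xstar < b <= b' ->
            g a = g b + g1 b * (a - b) -> g a' = g b' + g1 b' * (a' - b') ->
            a = a' /\ b = b').
  { intros a a' b b' Ha Ha' Hb Ta Ta'.
    assert (Hb' : b = b').
    { destruct (Rle_lt_or_eq_dec b b' (proj2 Hb)) as [Hlt|Heq]; [exfalso|auto].
      destruct (MVg b b' ltac:(lra)) as [c [Hc E]].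
      pose proof (G1inc c b' ltac:(lra)). pose proof (G1inc b b' ltac:(lra)).
      assert (0 < (g1 b' - g1 c) * (b' - b)) by (apply Rmult_lt_0_compat; lra).
      assert (0 < (g1 b' - g1 b) * (b - a')) by (apply Rmult_lt_0_compat; lra).
      assert (Dn : g a' - (g1 b * a' + (g b - g1 b * b)) < 0) by nra.
      pose proof (TanPos b ltac:(lra)) as TP.
      destruct (Rle_lt_or_eq_dec a a' (proj2 Ha)) as [Hl|He].
      - pose proof (CL (g1 b) (g b - g1 b * b) a a' ltac:(lra) Ha' ltac:(lra) TP). lra.
      - subst a'. lra. }
    subst b'. split; [|auto].
    destruct (Rle_lt_or_eq_dec a a' (proj2 Ha)) as [Hl|He]; [exfalso|auto].
    pose proof (TanPos b ltac:(lra)) as TP.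
    pose proof (CL (g1 b) (g b - g1 b * b) a a' ltac:(lra) Ha' ltac:(lra) TP). lra. }
  assert (P3 : forall xu, 0 < xu -> 0 <= xu - k * g xu / g1 xu ->
     (has_left_deriv (Jval g (xu - k * g xu / g1 xu) xu) xu 1 <->
      g (xu - k * g xu / g1 xu) = (1 - k) * g xu)).
  { intros xu Hxu Hh.
    pose proof (Gpos xu Hxu) as Hgp. pose proof (Hg1pos xu ltac:(lra)) as Hg1p.
    assert (Hd : 0 < k * g xu / g1 xu).
    { apply Rdiv_lt_0_compat; [apply Rmult_lt_0_compat|]; lra. }
    set (hx := xu - k * g xu / g1 xu) in *.
    assert (Hhx : hx < xu) by (unfold hx; lra).
    pose proof (Ginc hx xu ltac:(lra)) as HS.
    rewrite (left_deriv_J g g1 hx xu 1 Hxu (Hg_d xu Hxu)).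
    assert (Ex : xu - hx = k * g xu / g1 xu) by (unfold hx; ring).
    rewrite Ex. split.
    - intros H.
      assert (g xu - g hx = k * g xu).
      { transitivity ((g xu - g hx) * (k * g xu / g1 xu / (g xu - g hx) * g1 xu)).
        rewrite <- H; ring. field; lra. }
      lra.
    - intros H. rewrite H. field. repeat split; try lra.
      }
  assert (BS : forall xu, 0 < xu -> 0 <= xu - k * g xu / g1 xu ->
     g (xu - k * g xu / g1 xu) = (1 - k) * g xu ->
     barrier_system g k (xu - k * g xu / g1 xu) xu).
  { intros xu Hxu Hh E.
    pose proof (Gpos xu Hxu) as Hgp. pose proof (Hg1pos xu ltac:(lra)) as Hg1p.
    assert (Hd : 0 < k * g xu / g1 xu).
    { apply Rdiv_lt_0_compat; [apply Rmult_lt_0_compat|]; lra. }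
    split; [exact Hh|]. split; [lra|]. split.
    - unfold Rval. rewrite E. field. split; nra.
    - apply (proj2 (P3 xu Hxu Hh)). exact E. }
  assert (UQ : forall xl xu yl yu, barrier_system g k xl xu -> barrier_system g k yl yu ->
            yl = xl /\ yu = xu).
  { intros xl xu yl yu Hx Hy.
    destruct (SC xl xu Hx) as [X1 [X2 [X3 [X4 X5]]]].
    destruct (SC yl yu Hy) as [Y1 [Y2 [Y3 [Y4 Y5]]]].
    assert (Hk1 : k < 1 \/ k = 1) by lra.
    assert (Gle : forall a b, 0 <= a <= b -> g a <= g b).
    { intros a b Hab. destruct (Rle_lt_or_eq_dec a b (proj2 Hab)) as [H|H].
      left; apply Ginc; lra. subst; lra. }
    destruct (Rle_or_lt xl yl) as [L1|L1]; destruct (Rle_or_lt xu yu) as [L2|L2].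
    - destruct (TL xl yl xu yu ltac:(lra) ltac:(lra) ltac:(lra) X4 Y4). split; congruence.
    - pose proof (Gle xl yl ltac:(lra)). pose proof (Ginc yu xu ltac:(lra)).
      destruct Hk1 as [Hk1|Hk1].
      + exfalso. assert (0 < (1 - k) * (g xu - g yu)) by (apply Rmult_lt_0_compat; lra). nra.
      + subst k. assert (xl = 0) by (apply Gz; lra). assert (yl = 0) by (apply Gz; lra).
        destruct (TL yl xl yu xu ltac:(lra) ltac:(lra) ltac:(lra) Y4 X4). split; congruence.
    - exfalso. pose proof (Ginc yl xl ltac:(lra)). pose proof (Gle xu yu ltac:(lra)).
      assert (0 <= (1 - k) * (g yu - g xu)) by (apply Rmult_le_pos; lra). nra.
    - destruct (TL yl xl yu xu ltac:(lra) ltac:(lra) ltac:(lra) Y4 X4). split; congruence. }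
  assert (Ex1 : exists x1, xstar < x1 /\ g x1 <= x1 * g1 x1).
  { destruct (classic (exists x1, xstar < x1 /\ g x1 <= x1 * g1 x1)) as [H|Hn]; [exact H|exfalso].
    assert (HF : forall x, xstar < x -> x * g1 x < g x).
    { intros x Hx. destruct (Rlt_or_le (x * g1 x) (g x)) as [H|H]; [exact H|].
      exfalso; apply Hn; exists x; split; auto. }
    set (X0 := xstar + 1).
    assert (HX0p : xstar < X0) by (unfold X0; lra).
    assert (HB : forall x, X0 < x -> g1 x * X0 < g X0).
    { intros x Hx. destruct (MVg X0 x ltac:(unfold X0 in *; lra)) as [c [Hc E]].
      assert (g1 c < g1 x) by (apply G1inc; unfold X0 in *; lra).
      pose proof (HF x ltac:(unfold X0 in *; lra)).
      assert (g1 c * (x - X0) <= g1 x * (x - X0)) by (apply Rmult_le_compat_r; lra).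
      nra. }
    set (m := g1 xstar). assert (Hm : 0 < m) by (apply Hg1pos; lra).
    assert (Hgm : forall x, xstar < x -> m < g1 x) by (intros; apply G1inc; lra).
    destruct HA4 as [eps [xa [Heps [Hxa Hmu']]]].
    assert (Hmub : forall x, xa <= x -> mu x <= mu xa + (r - eps) * (x - xa)).
    { intros x Hx. destruct (MVT_gen mu xa x mu') as [c [Hc E]].
      - intros; apply Hmu_d.
      - intros; apply (is_derive_cont _ _ _ (Hmu_d _)).
      - rewrite Rmin_left, Rmax_right in Hc by lra.
        pose proof (Hmu' c ltac:(lra)).
        assert (mu' c * (x - xa) <= (r - eps) * (x - xa)) by (apply Rmult_le_compat_r; lra).
        lra. }
    destruct Hsigma_L as [Ls HLs].
    set (A := Rabs (sigma 0)).
    assert (HA0 : 0 <= A) by apply Rabs_pos.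
    assert (Hsb : forall x, 0 <= x -> Rabs (sigma x) <= A + Rabs Ls * x).
    { intros x Hx. pose proof (HLs x 0) as H. rewrite Rminus_0_r, (Rabs_pos_eq x Hx) in H.
      pose proof (Rabs_triang_inv (sigma x) (sigma 0)).
      assert (Ls * x <= Rabs Ls * x) by (apply Rmult_le_compat_r; [lra|apply Rle_abs]).
      unfold A; lra. }
    set (K := (A + Rabs Ls) ^ 2).
    assert (HsK : forall x, 1 <= x -> sigma x ^ 2 <= K * x ^ 2).
    { intros x Hx. pose proof (Hsb x ltac:(lra)). pose proof (Rabs_pos (sigma x)).
      pose proof (Rabs_pos Ls).
      assert (Rabs Ls * x >= Rabs Ls) by nra.
      assert (A <= A * x) by nra.
      assert (Rabs (sigma x) <= (A + Rabs Ls) * x) by nra.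
      rewrite <- pow2_abs. unfold K.
      replace ((A + Rabs Ls) ^ 2 * x ^ 2) with (((A + Rabs Ls) * x) ^ 2) by ring.
      nra. }
    set (C0 := (r - eps) * xa - mu xa).
    set (X := xa + X0 + 1 + 2 * Rabs C0 / eps).
    assert (HX1 : xa + X0 + 1 <= X).
    { unfold X. assert (0 <= 2 * Rabs C0 / eps).
      { apply Rmult_le_pos. pose proof (Rabs_pos C0); lra. left; apply Rinv_0_lt_compat; lra. }
      lra. }
    assert (HX2 : 2 * Rabs C0 <= eps * X).
    { unfold X. assert (eps * (2 * Rabs C0 / eps) = 2 * Rabs C0) by (field; lra).
      assert (0 <= eps * (xa + X0 + 1)) by (apply Rmult_le_pos; unfold X0 in *; lra).
      rewrite Rmult_plus_distr_l. lra. }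
    assert (HX0 : X0 < X) by (unfold X0 in *; lra).
    assert (HXs : xstar < X) by (unfold X0 in *; lra).
    set (c := m * eps / K).
    assert (Hg2b : forall x, X <= x -> c <= g2 x * x).
    { intros x Hx.
      assert (Hx0 : 0 < x) by lra.
      pose proof (Hode x Hx0) as HO.
      pose proof (HF x ltac:(lra)).
      pose proof (Hmub x ltac:(lra)).
      pose proof (Hgm x ltac:(lra)).
      pose proof (HsK x ltac:(unfold X0 in *; lra)).
      pose proof (HA2 x ltac:(lra)).
      pose proof (Rle_abs C0). pose proof (Rle_abs (- C0)). rewrite Rabs_Ropp in *.
      assert (Hrx : eps * x / 2 <= r * x - mu x).
      { assert (eps * X <= eps * x) by (apply Rmult_le_compat_l; lra). unfold C0 in *. lra. }
      assert (HQ : m * eps * x / 2 <= r * g x - mu x * g1 x).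
      { assert (r * (x * g1 x) <= r * g x) by (apply Rmult_le_compat_l; lra).
        assert (g1 x * (eps * x / 2) <= g1 x * (r * x - mu x)) by (apply Rmult_le_compat_l; lra).
        assert (m * (eps * x / 2) <= g1 x * (eps * x / 2)).
        { apply Rmult_le_compat_r; [|lra]. assert (0 < eps * x) by nra. lra. }
        nra. }
      assert (Hs2 : m * eps * x <= sigma x ^ 2 * g2 x) by nra.
      assert (Hg2p : 0 < g2 x).
      { assert (0 < m * eps * x) by (apply Rmult_lt_0_compat; [apply Rmult_lt_0_compat|]; lra).
        destruct (Rlt_or_le 0 (g2 x)) as [?|Hn2]; [auto|].
        assert (sigma x ^ 2 * g2 x <= 0) by nra. lra. }
      assert (HKp : 0 < K) by nra.
      assert (m * eps * x <= K * x ^ 2 * g2 x) by nra.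
      unfold c. apply (Rmult_le_reg_r K); [lra|].
      unfold Rdiv. rewrite Rmult_assoc, Rinv_l by lra. rewrite Rmult_1_r.
      apply (Rmult_le_reg_r x); [lra|]. nra. }
    assert (Hcp : 0 < c).
    { unfold c. apply Rdiv_lt_0_compat. apply Rmult_lt_0_compat; lra.
      pose proof (HsK X ltac:(unfold X0 in *; lra)). pose proof (HA2 X ltac:(lra)).
      assert (0 < X ^ 2) by (apply pow_lt; lra). nra. }
    assert (Phi : forall u v, X <= u <= v -> g1 u - c * ln u <= g1 v - c * ln v).
    { intros u v Huv.
      assert (Hd : forall y, X <= y -> is_derive (fun y => g1 y - c * ln y) y (g2 y - c * / y)).
      { intros y Hy. apply (is_derive_minus g1 (fun y => c * ln y)). apply Hg1_d; lra.
        apply is_derive_scal. apply is_derive_ln. lra. }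
      destruct (MVT_gen (fun y => g1 y - c * ln y) u v (fun y => g2 y - c * / y)) as [z [Hz E]].
      - intros y Hy. rewrite Rmin_left, Rmax_right in Hy by lra. apply Hd; lra.
      - intros y Hy. rewrite Rmin_left, Rmax_right in Hy by lra.
        apply (is_derive_cont _ _ _ (Hd y ltac:(lra))).
      - rewrite Rmin_left, Rmax_right in Hz by lra.
        pose proof (Hg2b z ltac:(lra)).
        assert (0 <= g2 z - c * / z).
        { assert (c * / z <= g2 z).
          { apply (Rmult_le_reg_r z); [lra|]. rewrite Rmult_assoc, Rinv_l by lra. lra. }
          lra. }
        assert (0 <= (g2 z - c * / z) * (v - u)) by (apply Rmult_le_pos; lra).
        simpl in E. lra. }
    set (M := Rabs (g X0 / X0) + Rabs (g1 X) + 1).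
    set (x := X * exp (M / c)).
    assert (HXp : 0 < X) by lra.
    assert (Hlx : ln x = ln X + M / c) by (unfold x; rewrite ln_mult, ln_exp; [auto|lra|apply exp_pos]).
    assert (HMp : 0 < M / c).
    { apply Rdiv_lt_0_compat; [|lra]. unfold M. pose proof (Rabs_pos (g X0 / X0)). pose proof (Rabs_pos (g1 X)). lra. }
    assert (Hxg : X < x).
    { unfold x. pose proof (exp_ineq1 (M / c) ltac:(lra)). nra. }
    pose proof (Phi X x ltac:(lra)) as HP.
    rewrite Hlx in HP.
    assert (c * (M / c) = M) by (field; lra).
    assert (g1 x >= g1 X + M) by nra.
    pose proof (HB x ltac:(lra)).
    assert (g1 x < g X0 / X0).
    { apply (Rmult_lt_reg_r X0); [unfold X0 in *; lra|]. unfold Rdiv. rewrite Rmult_assoc, Rinv_l by (unfold X0 in *; lra). lra. }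
    pose proof (Rle_abs (g X0 / X0)). pose proof (Rle_abs (- g1 X)). rewrite Rabs_Ropp in *.
    unfold M in *. lra. }
  assert (EX : exists xl xu, barrier_system g k xl xu).
  { destruct Ex1 as [x1 [Hx1 Hx1F]].
    assert (Hx1p : 0 < x1) by lra.
    assert (Hgs : xstar * g1 xstar < g xstar).
    { destruct (MVg 0 xstar ltac:(lra)) as [c [Hc E]].
      pose proof (G1dec c xstar ltac:(lra) ltac:(lra)). rewrite Hg0 in E. nra. }
    assert (Hk1 : k < 1 \/ k = 1) by lra.
    destruct Hk1 as [Hk1|Hk1].
    - set (h := fun x => x - k * g x / g1 x).
      assert (Hhc : forall a, 0 < a -> continuity_pt h a).
      { intros a Ha. unfold h.
        apply (continuity_pt_minus (fun x => x) (fun x => k * g x / g1 x)).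
        apply continuity_pt_id.
        apply (continuity_pt_div (fun x => k * g x) g1).
        apply (continuity_pt_scal g k). apply Hgc; lra. apply Hg1c; lra.
        pose proof (Hg1pos a ltac:(lra)); lra. }
      set (Gam := fun x => g (Rmax 0 (h x)) - (1 - k) * g x + / 2 * (h x - Rabs (h x))).
      assert (HGc : forall a, 0 < a -> continuity_pt Gam a).
      { intros a Ha. unfold Gam.
        apply (continuity_pt_plus (fun x => g (Rmax 0 (h x)) - (1 - k) * g x) (fun x => / 2 * (h x - Rabs (h x)))).
        apply (continuity_pt_minus (fun x => g (Rmax 0 (h x))) (fun x => (1 - k) * g x)).
        apply (continuity_pt_comp h (fun y => g (Rmax 0 y))). apply Hhc; lra.
        apply (gt_cont g g1 Hgc Hg'0).
        apply (continuity_pt_scal g (1 - k)). apply Hgc; lra.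
        apply (continuity_pt_scal (fun x => h x - Rabs (h x)) (/ 2)).
        apply (continuity_pt_minus h (fun x => Rabs (h x))). apply Hhc; lra.
        apply (continuity_pt_comp h Rabs). apply Hhc; lra. apply Rcontinuity_abs. }
      assert (HGs : Gam xstar < 0).
      { unfold Gam. pose proof (Gpos xstar Hxstar). pose proof (Hg1pos xstar ltac:(lra)).
        assert (Hd : 0 < k * g xstar / g1 xstar).
        { apply Rdiv_lt_0_compat; [apply Rmult_lt_0_compat|]; lra. }
        destruct (Rlt_or_le (h xstar) 0) as [Hn|Hp].
        - rewrite Rmax_left by lra. rewrite Rabs_left by lra. rewrite Hg0.
          assert (0 <= (1 - k) * g xstar) by (apply Rmult_le_pos; lra). lra.
        - rewrite Rmax_right by lra. rewrite Rabs_pos_eq by lra.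
          assert (h xstar < xstar) by (unfold h; lra).
          pose proof (TanNeg xstar (h xstar) ltac:(lra) ltac:(lra)).
          assert (g xstar + g1 xstar * (h xstar - xstar) = (1 - k) * g xstar)
            by (unfold h; field; lra).
          lra. }
      assert (HG1 : 0 <= Gam x1).
      { unfold Gam. pose proof (Gpos x1 Hx1p). pose proof (Hg1pos x1 ltac:(lra)).
        assert (Hd : 0 < k * g x1 / g1 x1).
        { apply Rdiv_lt_0_compat; [apply Rmult_lt_0_compat|]; lra. }
        assert (Hh0 : 0 <= h x1).
        { unfold h. assert (k * g x1 / g1 x1 <= x1); [|lra].
          apply (Rmult_le_reg_r (g1 x1)); [lra|].
          unfold Rdiv. rewrite Rmult_assoc, Rinv_l by lra. nra. }
        assert (Hh1 : h x1 < x1) by (unfold h; lra).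
        rewrite Rmax_right by lra. rewrite Rabs_pos_eq by lra.
        assert (ET : g x1 + g1 x1 * (h x1 - x1) = (1 - k) * g x1) by (unfold h; field; lra).
        assert (g (h x1) >= g x1 + g1 x1 * (h x1 - x1)); [|lra].
        destruct (Rle_or_lt xstar (h x1)) as [Hs|Hs].
        - pose proof (TanConv x1 (h x1) ltac:(lra)). lra.
        - destruct (Rle_lt_or_eq_dec 0 (h x1) Hh0) as [Hp|Hz].
          + pose proof (TanPos x1 Hx1) as TP.
            assert (D0 : g 0 - (g1 x1 * 0 + (g x1 - g1 x1 * x1)) >= 0) by (rewrite Hg0; nra).
            pose proof (CL (g1 x1) (g x1 - g1 x1 * x1) 0 (h x1) ltac:(lra) Hs D0 TP). nra.
          + rewrite <- Hz, Hg0. nra. }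
      assert (Hroot : exists xu, xstar <= xu <= x1 /\ Gam xu = 0).
      { destruct (Rle_lt_or_eq_dec 0 (Gam x1) HG1) as [Hp|Hz].
        - destruct (IVT_interv Gam xstar x1) as [z [Hz1 Hz2]].
          + intros a Ha. apply HGc; lra.
          + exact Hx1.
          + exact HGs.
          + exact Hp.
          + exists z. split; auto.
        - exists x1. split; [lra|auto]. }
      destruct Hroot as [xu [Hxu E]].
      assert (Hxup : 0 < xu) by lra.
      pose proof (Gpos xu Hxup).
      assert (Hh : 0 <= h xu).
      { destruct (Rle_or_lt 0 (h xu)) as [?|Hn]; [auto|exfalso].
        unfold Gam in E. rewrite Rmax_left in E by lra. rewrite Rabs_left in E by lra.
        rewrite Hg0 in E.
        assert (0 <= (1 - k) * g xu) by (apply Rmult_le_pos; lra). lra. }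
      exists (xu - k * g xu / g1 xu), xu. apply BS; [exact Hxup|exact Hh|].
      unfold Gam in E. rewrite Rmax_right in E by lra. rewrite Rabs_pos_eq in E by lra.
      change (xu - k * g xu / g1 xu) with (h xu). lra.
    - assert (Hroot : exists xu, xstar <= xu <= x1 /\ xu * g1 xu - g xu = 0).
      { destruct (Rle_lt_or_eq_dec 0 (x1 * g1 x1 - g x1) ltac:(lra)) as [Hp|Hz].
        - destruct (IVT_interv (fun x => x * g1 x - g x) xstar x1) as [z [Hz1 Hz2]].
          + intros a Ha. apply (continuity_pt_minus (fun x => x * g1 x) g).
            apply (continuity_pt_mult (fun x => x) g1). apply continuity_pt_id.
            apply Hg1c; lra. apply Hgc; lra.
          + exact Hx1.
          + simpl. lra.
          + exact Hp.
          + exists z. split; auto.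
        - exists x1. split; [lra|auto]. }
      destruct Hroot as [xu [Hxu E]].
      assert (Hxup : 0 < xu) by lra.
      pose proof (Hg1pos xu ltac:(lra)).
      assert (Eh : xu - k * g xu / g1 xu = 0).
      { rewrite Hk1. replace (g xu) with (xu * g1 xu) by lra. field. lra. }
      exists (xu - k * g xu / g1 xu), xu. apply BS; [exact Hxup|lra|].
      rewrite Eh, Hg0, Hk1. ring. }
  split; [|split].
  - destruct EX as [xl [xu H]]. exists xl, xu. split; [exact H|].
    intros yl yu Hy. exact (UQ xl xu yl yu H Hy).
  - intros xl xu H.
    destruct (SC xl xu H) as [X1 [X2 [X3 [X4 X5]]]].
    assert (Hxu : 0 < xu) by lra.
    pose proof (Gpos xu Hxu) as Hgp. pose proof (Hg1pos xu ltac:(lra)) as Hg1p.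
    assert (Exl : xl = xu - k * g xu / g1 xu).
    { assert (g1 xu * (xu - xl) = k * g xu) by lra.
      apply (Rmult_eq_reg_l (g1 xu)); [|lra]. rewrite Rmult_minus_distr_l.
      replace (g1 xu * (k * g xu / g1 xu)) with (k * g xu) by (field; lra). lra. }
    split; [lra|]. split; [|split; [|split]].
    + intros Hk1. subst k. apply Gz; lra.
    + intros Hk1. destruct (Rle_lt_or_eq_dec 0 xl X1) as [Hl|Hl]; [exact Hl|].
      exfalso. rewrite <- Hl, Hg0 in X3.
      assert (0 < (1 - k) * g xu) by (apply Rmult_lt_0_compat; lra). lra.
    + rewrite <- Exl. exact (proj2 (proj2 (proj2 H))).
    + exact Exl.
  - exact P3.
Qed.
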